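(* Let $R$ be a commutative ring and $M$ a semisimple $R$-module. Let $B$ be the set of all maximal second submodules of $M$, and assume that $Ann(M)\neq\bigcap_{K\in B\setminus\{N\}}Ann(K)$ for every $N\in B$. Then the following are equivalent: (1) $M$ is a multiplication module; (2) every PS-hollow submodule of $M$ is simple; (3) every second submodule of $M$ is simple; (4) $M$ is a comultiplication module.
   Context: A submodule $N\neq 0$ of $M$ is second iff for every ideal $I\leq R$, $IN=N$ or $IN=0$; maximal second submodules are those maximal w.r.t. inclusion among second submodules. An $R$-submodule $N\leq M$ is PS-hollow iff for every ideal $I\leq R$ and every submodule $L\leq M$: $N\subseteq IM+L$ implies $N\subseteq IM$ or $N\subseteq L$. $M$ is a multiplication module iff every submodule of $M$ is of the form $IM$ for some ideal $I\leq R$. $M$ is a comultiplication module iff $K=(0:_M(0:_R K))$ for every submodule $K\leq M$. $Ann(K)=(0:_R K)$. *)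

(* Defs.v *)
From HB Require Import structures.
From mathcomp Require Import all_boot all_order all_algebra.
Set Implicit Arguments. Unset Strict Implicit. Unset Printing Implicit Defensive.
Import GRing.Theory.
Local Open Scope ring_scope.

Section ModDefs.
Variables (R : comNzRingType) (M : lmodType R).

Definition pset_eq {T : Type} (A B : T -> Prop) := forall x, A x <-> B x.
Definition pset_sub {T : Type} (A B : T -> Prop) := forall x, A x -> B x.

Definition fullM : M -> Prop := fun _ => True.
Definition zeroM : M -> Prop := fun x => x = 0.

Definition is_submodule (N : M -> Prop) : Prop :=
  [/\ N 0, (forall x y, N x -> N y -> N (x + y)) & (forall (r : R) x, N x -> N (r *: x))].

Definition is_ideal (I : R -> Prop) : Prop :=
  [/\ I 0, (forall a b, I a -> I b -> I (a + b)) & (forall r a, I a -> I (r * a))].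

Definition ideal_mul (I : R -> Prop) (N : M -> Prop) : M -> Prop :=
  fun x => exists s : seq (R * M),
    (forall p, p \in s -> I p.1 /\ N p.2) /\ x = \sum_(p <- s) p.1 *: p.2.

Definition sum_sub (A B : M -> Prop) : M -> Prop :=
  fun x => exists a b, A a /\ B b /\ x = a + b.

Definition Ann (K : M -> Prop) : R -> Prop := fun r => forall x, K x -> r *: x = 0.

Definition annM (J : R -> Prop) : M -> Prop := fun x => forall r, J r -> r *: x = 0.

Definition nonzero (N : M -> Prop) : Prop := exists x, N x /\ x <> 0.

Definition is_simple_sub (N : M -> Prop) : Prop :=
  [/\ is_submodule N, nonzero N &
    forall L, is_submodule L -> pset_sub L N -> pset_eq L zeroM \/ pset_eq L N].

Definition semisimple : Prop :=
  forall N, is_submodule N -> exists L, is_submodule L /\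
    pset_eq (fun x => N x /\ L x) zeroM /\ pset_eq (sum_sub N L) fullM.

Definition is_second (N : M -> Prop) : Prop :=
  [/\ is_submodule N, nonzero N &
    forall I, is_ideal I -> pset_eq (ideal_mul I N) N \/ pset_eq (ideal_mul I N) zeroM].

Definition is_max_second (N : M -> Prop) : Prop :=
  is_second N /\ forall K, is_second K -> pset_sub N K -> pset_eq K N.

Definition is_PS_hollow (N : M -> Prop) : Prop :=
  [/\ is_submodule N, nonzero N &
    forall I L, is_ideal I -> is_submodule L ->
      pset_sub N (sum_sub (ideal_mul I fullM) L) ->
      pset_sub N (ideal_mul I fullM) \/ pset_sub N L].

Definition multiplication_module : Prop :=
  forall N, is_submodule N -> exists I, is_ideal I /\ pset_eq N (ideal_mul I fullM).

Definition comultiplication_module : Prop :=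
  forall K, is_submodule K -> pset_eq K (annM (Ann K)).

Definition Ann_B_minus (N : M -> Prop) : R -> Prop :=
  fun r => forall K, is_max_second K -> ~ pset_eq K N -> Ann K r.

End ModDefs.

(* Main.v *)
Require Import Defs.
From HB Require Import structures.
From mathcomp Require Import all_boot all_order all_algebra.
From mathcomp Require Import classical_sets.
From Stdlib Require Import Classical.
Set Implicit Arguments. Unset Strict Implicit. Unset Printing Implicit Defensive.
Import GRing.Theory.
Local Open Scope ring_scope.

Section Aux.
Variables (R : comNzRingType) (M : lmodType R).
Implicit Types (N L K C E A D S T : M -> Prop).

Lemma subN N (x : M) : is_submodule N -> N x -> N (- x).
Proof. case=> _ _ hs Nx; rewrite -scaleN1r; exact: hs. Qed.

Lemma subB N (x y : M) : is_submodule N -> N x -> N y -> N (x - y).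
Proof. move=> hN Nx Ny; case: (hN) => _ ha _; exact: ha Nx (subN hN Ny). Qed.

Lemma subI N L : is_submodule N -> is_submodule L -> is_submodule (fun y => N y /\ L y).
Proof.
case=> a0 aa as_ [b0 ba bs]; split => //.
- by move=> x y [? ?] [? ?]; split; [apply: aa|apply: ba].
- by move=> r x [? ?]; split; [apply: as_|apply: bs].
Qed.

Lemma subS N L : is_submodule N -> is_submodule L -> is_submodule (sum_sub N L).
Proof.
case=> a0 aa as_ [b0 ba bs]; split.
- by exists 0, 0; rewrite addr0.
- move=> x y [a [b [Na [Lb ->]]]] [a' [b' [Na' [Lb' ->]]]].
  exists (a + a'), (b + b'); split; [exact: aa|split; [exact: ba|]].
  by rewrite addrACA.
- move=> r x [a [b [Na [Lb ->]]]]; exists (r *: a), (r *: b).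
  by split; [exact: as_|split; [exact: bs|rewrite scalerDr]].
Qed.

Lemma sub0 : is_submodule (@zeroM R M).
Proof. split; rewrite /zeroM; [by []|by move=> x y -> ->; rewrite addr0|by move=> r x ->; rewrite scaler0]. Qed.

Lemma subcyc (v : M) : is_submodule (fun y => exists a : R, y = a *: v).
Proof.
split.
- by exists 0; rewrite scale0r.
- by move=> x y [a ->] [b ->]; exists (a + b); rewrite scalerDl.
- by move=> r x [a ->]; exists (r * a); rewrite scalerA.
Qed.

Lemma Ann_ideal K : is_ideal (Ann K).
Proof.
split.
- by move=> x _; rewrite scale0r.
- by move=> a b ha hb x Kx; rewrite scalerDl ha // hb // addr0.
- by move=> r a ha x Kx; rewrite -scalerA ha // scaler0.
Qed.

Lemma sub_sum N (s : seq (R * M)) (f : R * M -> M) :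
  is_submodule N -> (forall p, p \in s -> N (f p)) -> N (\sum_(p <- s) f p).
Proof.
case=> h0 ha _; elim: s => [|p s IH] hs; first by rewrite big_nil.
rewrite big_cons; apply: ha; first by apply: hs; rewrite inE eqxx.
by apply: IH => q qs; apply: hs; rewrite inE qs orbT.
Qed.

Lemma ideal_mul_in (I : R -> Prop) N N' : is_submodule N' ->
  (forall r m, I r -> N m -> N' (r *: m)) -> pset_sub (ideal_mul I N) N'.
Proof. move=> hN' h x [s [hs ->]]; apply: sub_sum => // p /hs [ip np]; exact: h. Qed.

Lemma ideal_mul_mono (I : R -> Prop) N N' : pset_sub N N' -> pset_sub (ideal_mul I N) (ideal_mul I N').
Proof. move=> h x [s [hs ->]]; exists s; split=> // p /hs [? ?]; split=> //; exact: h. Qed.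

Lemma ideal_mul1 (I : R -> Prop) N r m : I r -> N m -> ideal_mul I N (r *: m).
Proof.
move=> ir nm; exists [:: (r, m)]; split; last by rewrite big_seq1.
by move=> p; rewrite inE => /eqP ->.
Qed.

Lemma ideal_mul_submod (I : R -> Prop) N : is_ideal I -> is_submodule (ideal_mul I N).
Proof.
case=> _ _ hI; split.
- by exists [::]; split => //; rewrite big_nil.
- move=> x y [s [hs ->]] [t [ht ->]]; exists (s ++ t); split; last by rewrite big_cat.
  by move=> p; rewrite mem_cat => /orP [/hs|/ht].
- move=> r x [s [hs ->]]; exists [seq (r * p.1, p.2) | p <- s]; split.
  + move=> p /mapP [q qs ->] /=; have [? ?] := hs q qs; split=> //; exact: hI.
  + by rewrite big_map scaler_sumr; apply: eq_bigr => p _; rewrite scalerA.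
Qed.

Lemma decomp_eq (a c a' l : M) : a + c = a' + l -> c - l = a' - a.
Proof. by move=> e; apply/eqP; rewrite subr_eq addrAC -e addrC addKr. Qed.


Hypothesis ss : semisimple M.

Lemma compl N : is_submodule N -> exists C, [/\ is_submodule C,
  (forall x, N x -> C x -> x = 0) & (forall x, exists a c, [/\ N a, C c & x = a + c])].
Proof.
move=> hN; have [C [hC [h1 h2]]] := ss hN; exists C; split => //.
- by move=> x nx cx; apply/(h1 x).1.
- by move=> x; have [a [c [na [cc ->]]]] := (h2 x).2 Logic.I; exists a, c.
Qed.

Lemma compl_in N D : is_submodule N -> is_submodule D -> pset_sub D N ->
  exists E, [/\ is_submodule E, pset_sub E N, (forall x, D x -> E x -> x = 0) &
     (forall x, N x -> exists d e, [/\ D d, E e & x = d + e])].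
Proof.
move=> hN hD DN; have [C [hC DC dec]] := compl hD.
exists (fun y => N y /\ C y); split.
- exact: subI.
- by move=> y [].
- by move=> x Dx [_ Cx]; exact: DC.
- move=> x Nx; have [d [c [Dd Cc xe]]] := dec x; exists d, c; split => //.
  split => //; have -> : c = x - d by rewrite xe addrC addKr.
  by apply: subB => //; exact: DN.
Qed.

Lemma key E L (I : R -> Prop) : is_submodule E -> is_submodule L ->
  (forall x, E x -> L x -> x = 0) ->
  (forall r e, I r -> E e -> r *: e = 0) ->
  pset_sub E (sum_sub (ideal_mul I (@fullM R M)) L) -> forall x, E x -> x = 0.
Proof.
move=> hE hL EL IE EIL.
have [C' [hC' BC' decB]] := compl (subS hE hL).
pose C := sum_sub L C'.
have hC : is_submodule C := subS hL hC'.
have EC : forall x, E x -> C x -> x = 0.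
  move=> x Ex [l [c' [Ll [Cc' xe]]]].
  have c'0 : c' = 0.
    apply: BC' => //; exists x, (- l); split => //; split; first exact: subN.
    by rewrite xe addrC addKr.
  by apply: EL => //; rewrite xe c'0 addr0.
have decC : forall m, exists e c, [/\ E e, C c & m = e + c].
  move=> m; have [s [c' [[e [l [Ee [Ll se]]]] Cc' me]]] := decB m.
  exists e, (l + c'); split => //; first by exists l, c'.
  by rewrite me se addrA.
have IMC : pset_sub (ideal_mul I (@fullM R M)) C.
  apply: ideal_mul_in => // r m Ir _.
  have [e [c [Ee Cc ->]]] := decC m.
  rewrite scalerDr IE // add0r; by case: hC => _ _ hs; apply: hs.
move=> x Ex; apply: EC => //.
have [a [l [Ia [Ll ->]]]] := EIL x Ex.
case: hC => _ ha _; apply: ha; first exact: IMC.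
by exists l, 0; rewrite addr0; split => //; split => //; case: hC'.
Qed.


Lemma zorn_max N x : is_submodule N -> N x -> x <> 0 ->
  exists A, [/\ is_submodule A, pset_sub A N, ~ A x &
     forall B, is_submodule B -> pset_sub A B -> pset_sub B N -> ~ B x -> pset_sub B A].
Proof.
move=> hN Nx x0.
pose P := fun A : set M => [/\ pset_sub A N, ~ A x,
   (forall u v, A u -> A v -> A (u + v)) & (forall (r : R) u, A u -> A (r *: u))].
have [A [[AN Ax Aa As] Amax]] : exists A, P A /\ forall B, proper A B -> ~ P B.
  have bc : forall (F : set (set M)) y, bigcup F id y -> exists2 X, F X & X y.
    by move=> F y h; exact: h.
  apply: Zorn_bigcup => F FP Ftot; split.
  - by move=> y /bc [X FX Xy]; case: (FP X FX) => h _ _ _; exact: h.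
  - by move=> /bc [X FX Xx]; case: (FP X FX) => _ h _ _.
  - move=> u v /bc [X FX Xu] /bc [Y FY Yv]; case: (Ftot X Y FX FY) => [XY|YX].
    + by exists Y => //; case: (FP Y FY) => _ _ h _; apply: h => //; exact: XY.
    + by exists X => //; case: (FP X FX) => _ _ h _; apply: h => //; exact: YX.
  - by move=> r u /bc [X FX Xu]; exists X => //; case: (FP X FX) => _ _ _ h; exact: h.
have maxA : forall B, P B -> pset_sub A B -> pset_sub B A.
  move=> B PB AB y By; apply: NNPP => nAy; apply: (Amax B) => //; split => // BA.
  exact: nAy (BA y By).
case: hN => N0 Na Ns.
pose A0 := fun y => A y \/ y = 0.
have hA0 : is_submodule A0.
  split; first by right.
  - move=> u v [Au|->] [Av|->]; rewrite ?addr0 ?add0r; by [left; apply: Aa|left|left|right].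
  - by move=> r u [Au|->]; [left; apply: As|right; rewrite scaler0].
exists A0; split => //.
- by move=> y [Ay|->]; [exact: AN|].
- by case.
- move=> B [B0 Ba Bs] A0B BN Bx y By.
  have PB : P B by split.
  left; apply: (maxA B PB) => //.
  by move=> z Az; apply: A0B; left.
Qed.

Lemma exists_simple N x : is_submodule N -> N x -> x <> 0 ->
  exists S, is_simple_sub S /\ pset_sub S N.
Proof.
move=> hN Nx x0; have [A [hA AN Ax Amax]] := zorn_max hN Nx x0.
have [C [hC AC AMC]] := compl hA.
pose Q := fun y => N y /\ C y.
have hQ : is_submodule Q := subI hN hC.
have [a [c [Aa Cc xe]]] := AMC x.
have Nc : N c.
  have -> : c = x - a by rewrite xe addrC addKr.
  by apply: subB => //; exact: AN.
have c0 : c <> 0 by move=> c0; apply: Ax; rewrite xe c0 addr0.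
have star : forall L, is_submodule L -> pset_sub L Q -> (exists y, L y /\ y <> 0) -> L c.
  move=> L hL LQ [y [Ly y0]].
  have hB : is_submodule (sum_sub A L) := subS hA hL.
  have Bx : sum_sub A L x.
    apply: NNPP => nBx.
    have BA : pset_sub (sum_sub A L) A.
      apply: Amax => //.
      - by move=> z Az; exists z, 0; rewrite addr0; split => //; split => //; case: hL.
      - move=> z [a1 [l1 [Aa1 [Ll1 ->]]]]; case: hN => _ hNa _; apply: hNa.
        + exact: AN.
        + by case: (LQ _ Ll1).
    have Ay : A y by apply: BA; exists 0, y; rewrite add0r; split => //; case: hA.
    by apply: y0; apply: AC => //; case: (LQ _ Ly).
  have [a' [l [Aa' [Ll xe']]]] := Bx.
  have e := decomp_eq (etrans (esym xe) xe').
  have : c - l = 0.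
    apply: AC; first by rewrite e; apply: subB.
    by apply: subB => //; case: (LQ _ Ll).
  by move/subr0_eq => ->.
exists Q; split; last by move=> y [].
split => //; first by exists c.
move=> L hL LQ.
case: (classic (exists y, L y /\ y <> 0)) => [nz|z]; last first.
  left => y; split; last by move=> ->; case: hL.
  by move=> Ly; apply: NNPP => y0; apply: z; exists y.
right => y; split; first exact: LQ.
move=> Qy.
have [E [hE EQ LE dec]] := compl_in hQ hL LQ.
have E0 : forall e, E e -> e = 0.
  move=> e Ee; apply: NNPP => e0.
  apply: c0; apply: LE; first exact: star.
  by apply: star => //; exists e.
have [d [e [Ld Ee ->]]] := dec y Qy.
by rewrite (E0 e Ee) addr0.
Qed.


Lemma simple_second S : is_simple_sub S -> is_second S.
Proof.
case=> hS nzS simS; split => // I hI.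
have hJ := ideal_mul_submod S hI.
have JS : pset_sub (ideal_mul I S) S.
  by apply: ideal_mul_in => // r m _ Sm; case: hS => _ _ hs; apply: hs.
by case: (simS _ hJ JS); [right|left].
Qed.

Lemma simple_inter S T : is_simple_sub S -> is_simple_sub T ->
  pset_eq T S \/ (forall y, S y -> T y -> y = 0).
Proof.
move=> [hS nzS simS] [hT nzT simT].
case: (simS _ (subI hS hT) (fun y h => proj1 h)) => [h0|h1].
- by right => y Sy Ty; apply/(h0 y).1.
have ST : pset_sub S T by move=> y Sy; case: ((h1 y).2 Sy).
case: (simT _ hS ST) => [h2|h3].
- by exfalso; case: nzS => s [Ss s0]; apply: s0; apply/(h2 s).1.
- by left => y; split => [/(h3 y).2|/(h3 y).1].
Qed.

Lemma kill (r : R) K : is_submodule K ->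
  (forall T, is_simple_sub T -> pset_sub T K -> forall y, T y -> r *: y = 0) ->
  forall k, K k -> r *: k = 0.
Proof.
move=> hK hT k Kk; apply: NNPP => rk0.
pose N' := fun y => exists a : R, y = a *: (r *: k).
have hN' : is_submodule N' := subcyc (r *: k).
have N'K : pset_sub N' K.
  by move=> y [a ->]; case: hK => _ _ hs; apply: (hs); apply: (hs).
have [T [sT TN']] := exists_simple hN' (ex_intro _ 1 (esym (scale1r _))) rk0.
have [hTs _ _] := sT.
have kT : forall r' e, r' = r -> T e -> r' *: e = 0.
  by move=> r' e -> Te; apply: (hT T sT) => // z Tz; apply: N'K; apply: TN'.
have T0 := @key T (@zeroM R M) (fun a => a = r) hTs sub0 (fun x _ h => h) kT.
case: (sT) => _ [t [Tt t0]] _; apply: t0; apply: T0 => //.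
move=> y Ty; exists y, 0; split; last by split; [|rewrite addr0].
have [a ->] := TN' y Ty.
by rewrite scalerA mulrC -scalerA; apply: ideal_mul1.
Qed.


Lemma P1_P3 : multiplication_module M -> forall N, is_second N -> is_simple_sub N.
Proof.
move=> P1 N [hN nzN secN]; split => // L hL LN.
have [J [hJ LJ]] := P1 L hL.
case: (secN J hJ) => [JN|J0].
- right => y; split; first exact: LN.
  move=> Ny; apply/(LJ y).2; apply: (ideal_mul_mono (I:=J) (N:=N)) => //.
  exact/(JN y).2.
- left => y; split; last by move=> ->; case: hL.
  apply: (@key L (@zeroM R M) J hL sub0 (fun x _ h => h)).
  + move=> r e Jr Le; apply/(J0 (r *: e)).1; apply: ideal_mul1 => //; exact: LN.
  + move=> z Lz; exists z, 0; split; first exact/(LJ z).1.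
    by split; [|rewrite addr0].
Qed.

Lemma P4_P3 : comultiplication_module M -> forall N, is_second N -> is_simple_sub N.
Proof.
move=> P4 N [hN nzN secN]; split => // L hL LN.
case: (secN (Ann L) (Ann_ideal L)) => [JN|J0].
- left => y; split; last by move=> ->; case: hL.
  apply: (@key L (@zeroM R M) (Ann L) hL sub0 (fun x _ h => h)).
  + by move=> r e Jr Le; apply: Jr.
  + move=> z Lz; exists z, 0; split; last by split; [|rewrite addr0].
    apply: (ideal_mul_mono (I:=Ann L) (N:=N)) => //.
    by apply/(JN z).2; apply: LN.
- right => y; split; first exact: LN.
  move=> Ny; apply/(P4 L hL y).2 => r Jr.
  by apply/(J0 (r *: y)).1; apply: ideal_mul1.
Qed.

Lemma second_PS N : is_second N -> is_PS_hollow N.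
Proof.
move=> [hN nzN secN]; split => // I L hI hL NIL.
case: (secN I hI) => [IN|I0].
- left => y Ny; apply: (ideal_mul_mono (I:=I) (N:=N)) => //; exact/(IN y).2.
- right.
  have hD := subI hN hL.
  have [E [hE EN DE dec]] := compl_in hN hD (fun y h => proj1 h).
  have E0 := @key E L I hE hL
    (fun x Ex Lx => DE x (conj (EN x Ex) Lx) Ex)
    (fun r e Ir Ee => proj1 (I0 (r *: e)) (ideal_mul1 Ir (EN e Ee)))
    (fun x Ex => NIL x (EN x Ex)).
  move=> y Ny; have [d [e [[_ Ld] Ee ->]]] := dec y Ny.
  by rewrite (E0 e Ee) addr0.
Qed.

Lemma P2_P3 : (forall N, is_PS_hollow N -> is_simple_sub N) ->
  forall N, is_second N -> is_simple_sub N.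
Proof. by move=> P2 N sN; apply: P2; apply: second_PS. Qed.


Section P3.
Hypothesis P3 : forall N, is_second N -> is_simple_sub N.
Hypothesis H : forall N, is_max_second N -> ~ pset_eq (Ann (@fullM R M)) (Ann_B_minus N).

Lemma simple_max S : is_simple_sub S -> is_max_second S.
Proof.
move=> sS; split; first exact: simple_second.
move=> K sK SK; have [hK _ simK] := P3 sK.
have [hS [s [Ss s0]] _] := sS.
case: (simK S hS SK) => [h0|h1].
- by exfalso; apply: s0; apply/(h0 s).1.
- by move=> y; split => [/(h1 y).2|/(h1 y).1].
Qed.

Lemma separation S : is_simple_sub S ->
  exists r : R, (forall T, is_simple_sub T -> ~ pset_eq T S -> forall y, T y -> r *: y = 0)
    /\ exists s, S s /\ r *: s <> 0.
Proof.
move=> sS; have hH := H (simple_max sS).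
have [r hr] : exists r, ~ (Ann (@fullM R M) r <-> Ann_B_minus S r).
  by apply: NNPP => nex; apply: hH => r; apply: NNPP => nr; apply: nex; exists r.
have hB : Ann_B_minus S r.
  apply: NNPP => nb; apply: hr; split => [hA|hb]; last by [].
  by move=> K _ _ y _; apply: hA.
have nA : ~ Ann (@fullM R M) r by move=> hA; apply: hr; split.
exists r; split.
  by move=> T sT nTS; apply: hB => //; apply: simple_max.
apply: NNPP => ns; apply: nA => x _.
have hF : is_submodule (@fullM R M) by [].
apply: (@kill r (@fullM R M) hF) => // T sT _ y Ty.
case: (simple_inter sS sT) => [TS|TS0].
- apply: NNPP => ry; apply: ns; exists y; split => //; exact/(TS y).1.
- have nTS : ~ pset_eq T S.
    move=> e; have [_ [t [Tt t0]] _] := sT; apply: t0; apply: TS0 => //; exact/(e t).1.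
  exact: (hB T (simple_max sT) nTS).
Qed.

Lemma sep_sub S C : is_simple_sub S -> is_submodule C -> (forall y, S y -> C y -> y = 0) ->
  exists r : R, (forall y, C y -> r *: y = 0) /\ exists s, S s /\ r *: s <> 0.
Proof.
move=> sS hC SC; have [r [hr hs]] := separation sS; exists r; split => //.
apply: kill => // T sT TC; apply: hr => // e.
have [_ [s [Ss s0]] _] := sS; apply: s0; apply: SC => //; apply: TC; exact/(e s).2.
Qed.

Lemma P3_P4 : comultiplication_module M.
Proof.
move=> K hK x; split.
  by move=> Kx r hr; apply: hr.
move=> hx.
have [C [hC KC dec]] := compl hK.
have [k [c [Kk Cc xe]]] := dec x.
have hc : forall r, Ann K r -> r *: c = 0.
  move=> r hr; have -> : c = x - k by rewrite xe addrC addKr.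
  by rewrite scalerBr hx // hr // subr0.
suff c00 : c = 0 by rewrite xe c00 addr0.
apply: NNPP => c0.
have [S [sS Sc]] := exists_simple (subcyc c) (ex_intro _ 1 (esym (scale1r c))) c0.
have SK : forall y, S y -> K y -> y = 0.
  move=> y Sy Ky; apply: KC => //; have [a ->] := Sc y Sy.
  by case: hC => _ _ hs; apply: hs.
have [r [rK [s [Ss rs]]]] := sep_sub sS hK SK.
apply: rs; have [a ->] := Sc s Ss.
by rewrite scalerA mulrC -scalerA hc // scaler0.
Qed.

Lemma P3_P1 : multiplication_module M.
Proof.
move=> K hK.
have [C [hC KC dec]] := compl hK.
exists (Ann C); split; first exact: Ann_ideal.
have hQ := ideal_mul_submod (@fullM R M) (Ann_ideal C).
have QK : pset_sub (ideal_mul (Ann C) (@fullM R M)) K.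
  apply: ideal_mul_in => // r m hr _.
  have [k [c [Kk Cc ->]]] := dec m.
  rewrite scalerDr (hr c Cc) addr0; by case: hK => _ _ hs; apply: hs.
move=> k; split; last exact: QK.
move=> Kk.
have [Q' [hQ' QQ' decQ]] := compl hQ.
have [q [q' [Qq Qq' ke]]] := decQ k.
suff q'0 : q' = 0 by rewrite ke q'0 addr0.
apply: NNPP => q'0.
have Kq' : K q'.
  have -> : q' = k - q by rewrite ke addrC addKr.
  by apply: subB => //; apply: QK.
have [S [sS Sc]] := exists_simple (subcyc q') (ex_intro _ 1 (esym (scale1r q'))) q'0.
have SK : pset_sub S K by move=> y /Sc [a ->]; case: hK => _ _ hs; apply: hs.
have SQ' : pset_sub S Q' by move=> y /Sc [a ->]; case: hQ' => _ _ hs; apply: hs.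
have SC : forall y, S y -> C y -> y = 0 by move=> y Sy Cy; apply: KC => //; apply: SK.
have [r [rC [s [Ss rs]]]] := sep_sub sS hC SC.
apply: rs; apply: QQ'.
  by apply: ideal_mul1.
by case: hQ' => _ _ hs; apply: hs; apply: SQ'.
Qed.

Lemma P3_P2 N : is_PS_hollow N -> is_simple_sub N.
Proof.
move=> [hN nzN PS]; split => // L hL LN.
case: (classic (exists y, L y /\ y <> 0)) => [[y [Ly y0]]|z]; last first.
  left => y; split; last by move=> ->; case: hL.
  by move=> Ly; apply: NNPP => y0; apply: z; exists y.
right.
have [S [sS SL]] := exists_simple hL Ly y0.
have [hS [s0 [Ss0 s00]] simS] := sS.
have [C [hC SC dec]] := compl hS.
have [r [rC [s [Ss rs]]]] := sep_sub sS hC SC.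
pose I := fun a : R => exists b, a = b * r.
have hI : is_ideal I.
  split.
  - by exists 0; rewrite mul0r.
  - by move=> a b [a' ->] [b' ->]; exists (a' + b'); rewrite mulrDl.
  - by move=> r' a [b ->]; exists (r' * b); rewrite mulrA.
pose RS := fun y => exists z, S z /\ y = r *: z.
have hRS : is_submodule RS.
  split.
  - by exists 0; split; [case: hS|rewrite scaler0].
  - move=> u v [a [Sa ->]] [b [Sb ->]]; exists (a + b); split; last by rewrite scalerDr.
    by case: hS => _ ha _; apply: ha.
  - move=> r' u [a [Sa ->]]; exists (r' *: a); split; last by rewrite !scalerA mulrC.
    by case: hS => _ _ hs; apply: hs.
have RSS : pset_sub RS S.
  by move=> w [z [Sz ->]]; case: hS => _ _ hs; apply: hs.
have eRS : pset_eq RS S.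
  case: (simS RS hRS RSS) => // h0; exfalso; apply: rs; apply/(h0 (r *: s)).1.
  by exists s.
have IMS : pset_sub (ideal_mul I (@fullM R M)) S.
  apply: ideal_mul_in => // a m [b ->] _.
  have [s' [c [Ss' Cc ->]]] := dec m.
  rewrite -scalerA scalerDr (rC c Cc) addr0.
  by case: hS => _ _ hs; apply: (hs); apply: (hs).
have NIC : pset_sub N (sum_sub (ideal_mul I (@fullM R M)) C).
  move=> n _; have [s' [c [Ss' Cc ->]]] := dec n.
  exists s', c; split => //.
  have [z [Sz ->]] := (eRS s').2 Ss'.
  by apply: ideal_mul1 => //; exists 1; rewrite mul1r.
case: (PS I C hI hC NIC) => [NI|NC].
- move=> x; split; first exact: LN.
  by move=> Nx; apply: SL; apply: IMS; apply: NI.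
- exfalso; apply: rs; rewrite (SC s Ss); first by rewrite scaler0.
  by apply: NC; apply: LN; apply: SL.
Qed.

End P3.

End Aux.

Theorem theorem5p17 (R : comNzRingType) (M : lmodType R) :
  semisimple M ->
  (forall N : M -> Prop, is_max_second N ->
     ~ pset_eq (Ann (@fullM R M)) (Ann_B_minus N)) ->
  [/\ (multiplication_module M <-> (forall N : M -> Prop, is_PS_hollow N -> is_simple_sub N)),
      ((forall N : M -> Prop, is_PS_hollow N -> is_simple_sub N) <->
         (forall N : M -> Prop, is_second N -> is_simple_sub N)) &
      ((forall N : M -> Prop, is_second N -> is_simple_sub N) <-> comultiplication_module M)].
Proof.
move=> ss H; split; split.
- by move=> P1; apply: (P3_P2 ss) => //; apply: P1_P3.
- by move=> P2; apply: (P3_P1 ss) => //; apply: P2_P3.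
- exact: P2_P3.
- by move=> P3; apply: (P3_P2 ss).
- by move=> P3; apply: (P3_P4 ss).
- exact: P4_P3.
Qed.
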